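(* A formula $\varphi(\overline{x})$ of a complete theory $T$ is constantizable if and only if $\varphi(\overline{x})$ is $T$-equivalent to a Boolean combination of formulas of the form $x\approx y$ and $T$-formulas (without parameters) having finitely many solutions.
   Context: A $T$-formula $\varphi(\overline{x})$ is constantizable if $T$ has an expansion $T'$ (a complete theory $T'\supseteq T$ in a larger language) such that $\varphi(\overline{x})$ is $T'$-equivalent to a Boolean combination of formulas of the forms $x\approx y$ and $x\approx c$, with variables $x,y$ and constant symbols $c$ of the language of $T'$. *)

(* Defs.v *)
From mathcomp Require Import all_boot.
Set Implicit Arguments. Unset Strict Implicit. Unset Printing Implicit Defensive.

(* A first-order signature: function symbols (constants = arity 0) and relation symbols. *)
Record signature := Signature {
  funsym : Type; fun_ar : funsym -> nat;
  relsym : Type; rel_ar : relsym -> nat }.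

Section Syntax.
Variable L : signature.

Inductive term : Type :=
  | Var : nat -> term
  | App : forall f : funsym L, ('I_(fun_ar f) -> term) -> term.

Inductive formula : Type :=
  | FTrue | FFalse
  | Eq : term -> term -> formula
  | Rel : forall r : relsym L, ('I_(rel_ar r) -> term) -> formula
  | Not : formula -> formula
  | And : formula -> formula -> formula
  | Or : formula -> formula -> formula
  | Ex : nat -> formula -> formula
  | All : nat -> formula -> formula.

Fixpoint occurs (x : nat) (t : term) : Prop :=
  match t with
  | Var y => x = y
  | App f args => exists i, occurs x (args i)
  end.

Fixpoint free (x : nat) (phi : formula) : Prop :=
  match phi with
  | FTrue | FFalse => False
  | Eq t u => occurs x t \/ occurs x u
  | Rel r args => exists i, occurs x (args i)
  | Not p => free x p
  | And p q | Or p q => free x p \/ free x q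
  | Ex y p | All y p => x <> y /\ free x p
  end.

Definition sentence (phi : formula) := forall x, ~ free x phi.
Definition vars_in (xs : seq nat) (phi : formula) := forall x, free x phi -> x \in xs.

Record structure := Structure {
  carrier :> Type;
  witness : carrier;
  ifun : forall f : funsym L, ('I_(fun_ar f) -> carrier) -> carrier;
  irel : forall r : relsym L, ('I_(rel_ar r) -> carrier) -> Prop }.

Definition upd (M : Type) (e : nat -> M) (x : nat) (a : M) : nat -> M :=
  fun y => if y == x then a else e y.

Fixpoint eval (M : structure) (e : nat -> M) (t : term) : M :=
  match t with
  | Var x => e x
  | App f args => @ifun M f (fun i => eval e (args i))
  end.

Fixpoint sat (M : structure) (e : nat -> M) (phi : formula) : Prop :=
  match phi with
  | FTrue => True
  | FFalse => False
  | Eq t u => eval e t = eval e u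
  | Rel r args => @irel M r (fun i => eval e (args i))
  | Not p => ~ sat e p
  | And p q => sat e p /\ sat e q
  | Or p q => sat e p \/ sat e q
  | Ex x p => exists a : M, sat (upd e x a) p
  | All x p => forall a : M, sat (upd e x a) p
  end.

Definition theory := formula -> Prop.

Definition is_model (M : structure) (T : theory) :=
  forall s, T s -> forall e : nat -> M, sat e s.

Definition consequence (T : theory) (s : formula) :=
  forall M : structure, is_model M T -> forall e : nat -> M, sat e s.

Definition complete_theory (T : theory) :=
  [/\ forall s, T s -> sentence s,
      exists M : structure, is_model M T
    & forall s, sentence s -> consequence T s \/ consequence T (Not s)].

Definition T_equiv (T : theory) (phi psi : formula) :=
  forall M : structure, is_model M T -> forall e : nat -> M, sat e phi <-> sat e psi.

Definition finitely_many_solutions (T : theory) (psi : formula) :=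
  forall M : structure, is_model M T ->
    exists n (sol : 'I_n -> nat -> M), forall e : nat -> M, sat e psi ->
      exists i, forall x, free x psi -> sol i x = e x.

Inductive boolcomb (A : formula -> Prop) : formula -> Prop :=
  | bc_atom p : A p -> boolcomb A p
  | bc_true : boolcomb A FTrue
  | bc_false : boolcomb A FFalse
  | bc_not p : boolcomb A p -> boolcomb A (Not p)
  | bc_and p q : boolcomb A p -> boolcomb A q -> boolcomb A (And p q)
  | bc_or p q : boolcomb A p -> boolcomb A q -> boolcomb A (Or p q).

Definition eq_atom (xs : seq nat) (phi : formula) :=
  exists x y, [/\ x \in xs, y \in xs & phi = Eq (Var x) (Var y)].

Definition const_atom (xs : seq nat) (phi : formula) :=
  exists x (c : funsym L) (args : 'I_(fun_ar c) -> term),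
    [/\ x \in xs, fun_ar c = 0 & phi = Eq (Var x) (App args)].

End Syntax.

Arguments Var {L}.
Arguments FTrue {L}.
Arguments FFalse {L}.

(* L' is a larger language than L: injective arity-preserving symbol maps *)
Record sig_embedding (L L' : signature) := SigEmbedding {
  emb_f : funsym L -> funsym L';
  emb_f_ar : forall f, fun_ar (emb_f f) = fun_ar f;
  emb_f_inj : injective emb_f;
  emb_r : relsym L -> relsym L';
  emb_r_ar : forall r, rel_ar (emb_r r) = rel_ar r;
  emb_r_inj : injective emb_r }.

Section Translation.
Variables (L L' : signature) (E : sig_embedding L L').

Fixpoint tr_term (t : term L) : term L' :=
  match t with
  | Var x => Var x
  | App f args => App (fun i => tr_term (args (cast_ord (emb_f_ar E f) i)))
  end.

Fixpoint tr_form (phi : formula L) : formula L' :=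
  match phi with
  | FTrue => FTrue
  | FFalse => FFalse
  | Eq t u => Eq (tr_term t) (tr_term u)
  | Rel r args => Rel (fun i => tr_term (args (cast_ord (emb_r_ar E r) i)))
  | Not p => Not (tr_form p)
  | And p q => And (tr_form p) (tr_form q)
  | Or p q => Or (tr_form p) (tr_form q)
  | Ex x p => Ex x (tr_form p)
  | All x p => All x (tr_form p)
  end.
End Translation.

Definition constantizable (L : signature) (T : theory L) (xs : seq nat) (phi : formula L) :=
  exists (L' : signature) (E : sig_embedding L L') (T' : theory L'),
    [/\ complete_theory T',
        (forall s, T s -> T' (tr_form E s))
      & exists psi, boolcomb (fun chi => eq_atom xs chi \/ const_atom xs chi) psi
                    /\ T_equiv T' (tr_form E phi) psi].

(* Main.v *)
Require Import Defs.
From mathcomp Require Import all_boot.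
From Stdlib Require Import Classical ClassicalEpsilon FunctionalExtensionality.
From Stdlib Require List.
Set Implicit Arguments. Unset Strict Implicit. Unset Printing Implicit Defensive.

Section Basics.
Variable L : signature.
Implicit Types (M : structure L) (p q : formula L) (t : term L).

Lemma eval_agree M (e e' : nat -> M) t :
  (forall u, occurs u t -> e u = e' u) -> eval e t = eval e' t.
Proof.
elim: t => [n|f args IH] H /=; first by apply: H.
congr (ifun _); apply: functional_extensionality => i.
apply: IH => u Hu; apply: H; by exists i.
Qed.

Lemma sat_agree M p : forall (e e' : nat -> M),
  (forall u, free u p -> e u = e' u) -> (sat e p <-> sat e' p).
Proof.
elim: p => [||t u|r args|p IH|p IHp q IHq|p IHp q IHq|x p IH|x p IH] e e' H /=.
- by [].
- by [].
- rewrite (eval_agree (e:=e) (e':=e')); last by move=> v Hv; apply: H; left.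
  rewrite (eval_agree (t:=u) (e:=e) (e':=e')) //; by move=> v Hv; apply: H; right.
- have -> : (fun i => eval e (args i)) = (fun i => eval e' (args i)) => //.
  apply: functional_extensionality => i; apply: eval_agree => v Hv; apply: H; by exists i.
- by rewrite (IH e e').
- by rewrite (IHp e e') ?(IHq e e') // => v Hv; apply: H; [right|left].
- by rewrite (IHp e e') ?(IHq e e') // => v Hv; apply: H; [right|left].
- have K a : forall v, free v p -> upd e x a v = upd e' x a v.
    move=> v Hv; rewrite /upd; case: eqP => // Hne; by apply: H.
  by split=> -[a Ha]; exists a; [apply/(IH _ _ (K a)) | apply/(IH _ _ (K a))].
- have K a : forall v, free v p -> upd e x a v = upd e' x a v.
    move=> v Hv; rewrite /upd; case: eqP => // Hne; by apply: H.
  by split=> Ha a; [apply/(IH _ _ (K a)) | apply/(IH _ _ (K a))].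
Qed.

Lemma upd_id (T : Type) (e : nat -> T) x : upd e x (e x) = e.
Proof. apply: functional_extensionality => y; rewrite /upd; by case: eqP => [->|]. Qed.

Definition ExChain (I : seq nat) p := foldr (fun x q => Ex x q) p I.
Definition AllChain (I : seq nat) p := foldr (fun x q => All x q) p I.

Lemma sat_ExChain M I p : forall (e : nat -> M),
  sat e (ExChain I p) <-> exists g : nat -> M, (forall u, u \notin I -> g u = e u) /\ sat g p.
Proof.
elim: I => [|x I IH] e /=.
- split; first by move=> H; exists e.
  move=> [g [Hg Hs]]; have -> : e = g by apply: functional_extensionality => u; rewrite Hg.
  done.
- split.
  + move=> [a /IH [g [Hg Hs]]]; exists g; split => // u; rewrite inE negb_or => /andP [Hux HuI].
    by rewrite Hg // /upd (negbTE Hux).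
  + move=> [g [Hg Hs]]; exists (g x); apply/IH; exists g; split => // u HuI.
    rewrite /upd; case: eqP => [->//|/eqP Hux]; apply: Hg; by rewrite inE negb_or Hux.
Qed.

Lemma free_ExChain I p u : free u (ExChain I p) -> u \notin I /\ free u p.
Proof.
elim: I => [|x I IH] //= [Hux /IH [H1 H2]]; split => //.
rewrite inE negb_or H1 andbT; apply/eqP => //.
Qed.

Lemma free_AllChain I p u : free u (AllChain I p) -> u \notin I /\ free u p.
Proof.
elim: I => [|x I IH] //= [Hux /IH [H1 H2]]; split => //.
rewrite inE negb_or H1 andbT; apply/eqP => //.
Qed.

Lemma sat_AllChain_intro M I p :
  (forall e : nat -> M, sat e p) -> forall e : nat -> M, sat e (AllChain I p).
Proof. elim: I => [|x I IH] //= H e a; exact: IH. Qed.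

Lemma sat_AllChain_elim M I p : forall (e : nat -> M), sat e (AllChain I p) -> sat e p.
Proof. elim: I => [|x I IH] //= e H; move: (H (e x)); rewrite upd_id; exact: IH. Qed.

Definition AndL (l : seq (formula L)) := foldr (@And L) FTrue l.
Definition OrL (l : seq (formula L)) := foldr (@Or L) FFalse l.

Lemma sat_AndL M (e : nat -> M) l : sat e (AndL l) <-> forall A, List.In A l -> sat e A.
Proof.
elim: l => [|A l IH] /=; first by split.
split; first by move=> [H1 /IH H2] B [<-|HB] //; exact: H2.
move=> H; split; first by apply: H; left. apply/IH => B HB; apply: H; by right.
Qed.

Lemma sat_OrL M (e : nat -> M) l : sat e (OrL l) <-> exists A, List.In A l /\ sat e A.
Proof.
elim: l => [|A l IH] /=; first by split => // -[A []].
split; first by move=> [H|/IH [B [HB H]]]; [exists A; split; [left|] | exists B; split; [right|]].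
move=> [B [[<-|HB] H]]; [by left | right; apply/IH; by exists B].
Qed.

Lemma free_AndL l u : free u (AndL l) -> exists A, List.In A l /\ free u A.
Proof.
elim: l => [|A l IH] //= [H|/IH [B [HB H]]]; [exists A; split; [left|] | exists B; split; [right|]] => //.
Qed.

Lemma free_OrL l u : free u (OrL l) -> exists A, List.In A l /\ free u A.
Proof.
elim: l => [|A l IH] //= [H|/IH [B [HB H]]]; [exists A; split; [left|] | exists B; split; [right|]] => //.
Qed.

Definition Iff p q := Or (And p q) (And (Not p) (Not q)).

Lemma sat_Iff M (e : nat -> M) p q : sat e (Iff p q) <-> (sat e p <-> sat e q).
Proof. rewrite /=; split; [tauto | move=> H; case: (classic (sat e p)); tauto]. Qed.

Lemma free_Iff p q u : free u (Iff p q) -> free u p \/ free u q.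
Proof. rewrite /=; tauto. Qed.

Lemma transfer (T : theory L) (N : structure L) W th :
  complete_theory T -> is_model N T -> vars_in W th ->
  (forall e : nat -> N, sat e th) ->
  forall M, is_model M T -> forall e : nat -> M, sat e th.
Proof.
move=> [_ _ Hc] HN Hv Hth M HM e.
have Hs : sentence (AllChain W th).
  move=> u /free_AllChain [H1 /Hv H2]; by rewrite H2 in H1.
case: (Hc _ Hs) => H.
- apply: (sat_AllChain_elim (I:=W)); exact: H.
- exfalso; apply: (H N HN (fun _ => witness N)); exact: sat_AllChain_intro.
Qed.

End Basics.

Section Red.
Variables (L L' : signature) (E : sig_embedding L L').

Definition reduct (M' : structure L') : structure L :=
  @Structure L (carrier M') (witness M')
    (fun f g => ifun (f := emb_f E f) (fun i => g (cast_ord (emb_f_ar E f) i)))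
    (fun r g => irel (r := emb_r E r) (fun i => g (cast_ord (emb_r_ar E r) i))).

Lemma eval_tr (M' : structure L') (e : nat -> M') t :
  eval e (tr_term E t) = eval (M := reduct M') e t.
Proof.
elim: t => [n|f args IH] //=; congr (ifun _); apply: functional_extensionality => i.
exact: IH.
Qed.

Lemma sat_tr (M' : structure L') p : forall (e : nat -> M'),
  sat e (tr_form E p) <-> sat (M := reduct M') e p.
Proof.
elim: p => [||t u|r args|p IH|p IHp q IHq|p IHp q IHq|x p IH|x p IH] e /=.
- by [].
- by [].
- by rewrite !eval_tr.
- have -> : (fun i => eval e (tr_term E (args (cast_ord (emb_r_ar E r) i)))) =
            (fun i => eval (M := reduct M') e (args (cast_ord (emb_r_ar E r) i))) => //.
  apply: functional_extensionality => i; exact: eval_tr.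
- by rewrite IH.
- by rewrite IHp IHq.
- by rewrite IHp IHq.
- by split=> -[a Ha]; exists a; apply/IH.
- by split=> Ha a; apply/IH.
Qed.

Lemma occurs_tr u t : occurs u (tr_term E t) <-> occurs u t.
Proof.
elim: t => [n|f args IH] //=; split.
- move=> [i /IH Hi]; by exists (cast_ord (emb_f_ar E f) i).
- move=> [i Hi]; exists (cast_ord (esym (emb_f_ar E f)) i); apply/IH.
  by rewrite cast_ordKV.
Qed.

Lemma free_tr u p : free u (tr_form E p) <-> free u p.
Proof.
elim: p => [||t v|r args|p IH|p IHp q IHq|p IHp q IHq|x p IH|x p IH] //=.
- by rewrite !occurs_tr.
- split.
  + move=> [i /occurs_tr Hi]; by exists (cast_ord (emb_r_ar E r) i).
  + move=> [i Hi]; exists (cast_ord (esym (emb_r_ar E r)) i); apply/occurs_tr.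
    by rewrite cast_ordKV.
- by rewrite IHp IHq.
- by rewrite IHp IHq.
- by rewrite IH.
- by rewrite IH.
Qed.
End Red.

Section Gen.
Variable L : signature.

Lemma bc_gen (M : structure L) (P : formula L -> Prop) (W : seq nat) (As : list (formula L)) :
  (forall A, List.In A As -> P A /\ vars_in W A) ->
  forall Q : (nat -> M) -> Prop,
  (forall e e', (forall A, List.In A As -> (sat e A <-> sat e' A)) -> Q e -> Q e') ->
  exists psi, boolcomb P psi /\ vars_in W psi /\ forall e, Q e <-> sat e psi.
Proof.
elim: As => [|A As IH] HAs Q HQ.
- case: (classic (exists e, Q e)) => [[e0 He0]|Hn].
  + exists FTrue; split; first exact: bc_true. split => // e; split => // _.
    by apply: (HQ e0).
  + exists FFalse; split; first exact: bc_false. split => // e; split => // He.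
    by apply: Hn; exists e.
- have HAs' : forall B, List.In B As -> P B /\ vars_in W B by move=> B HB; apply: HAs; right.
  have [HPA HvA] := HAs A (or_introl erefl).
  pose Q1 (e : nat -> M) := exists e' : nat -> M, (forall B, List.In B As -> (sat e B <-> sat e' B)) /\ sat e' A /\ Q e'.
  pose Q2 (e : nat -> M) := exists e' : nat -> M, (forall B, List.In B As -> (sat e B <-> sat e' B)) /\ ~ sat e' A /\ Q e'.
  have [p1 [Hb1 [Hv1 H1]]] : exists psi, boolcomb P psi /\ vars_in W psi /\ forall e, Q1 e <-> sat e psi.
    apply: IH => // e e' Hee [e'' [G1 G2]]; exists e''; split => // B HB.
    by rewrite -(G1 B HB) (Hee B HB).
  have [p2 [Hb2 [Hv2 H2]]] : exists psi, boolcomb P psi /\ vars_in W psi /\ forall e, Q2 e <-> sat e psi.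
    apply: IH => // e e' Hee [e'' [G1 G2]]; exists e''; split => // B HB.
    by rewrite -(G1 B HB) (Hee B HB).
  exists (Or (And A p1) (And (Not A) p2)); split.
    by apply: bc_or; apply: bc_and => //; [exact: bc_atom | apply: bc_not; exact: bc_atom].
  split; first by move=> u /= [[H|H]|[H|H]]; [apply: HvA|apply: Hv1|apply: HvA|apply: Hv2].
  move=> e /=; split.
  + move=> HQe; case: (classic (sat e A)) => HA; [left|right]; split => //;
      [apply/H1 | apply/H2]; exists e; split => //.
  + move=> [[HA /H1 [e' [Hee [HA' Hq]]]]|[HA /H2 [e' [Hee [HA' Hq]]]]];
    apply: (HQ e') => // B [<-|HB]; [by split|by rewrite (Hee B HB)|tauto|by rewrite (Hee B HB)].
Qed.
End Gen.

Section Lists.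
Variable A : Type.

Lemma cover_lemma (K : nat) : forall (P : A -> Prop),
  (forall ws, List.NoDup ws -> (forall w, List.In w ws -> P w) -> size ws <> K.+1) ->
  exists l, forall a, P a -> List.In a l.
Proof.
elim: K => [|K IH] P H.
- exists [::] => a Pa; apply: (H [:: a]) => //; first by constructor; [|constructor].
  by move=> w [<-|].
- case: (classic (exists a, P a)) => [[a Pa]|Hn]; last by exists [::] => a Pa; apply: Hn; exists a.
  have [l Hl] : exists l, forall b, (P b /\ b <> a) -> List.In b l.
    apply: IH => ws Hnd Hws Hs.
    apply: (H (a :: ws)); last by rewrite /= Hs.
    + constructor => //; by move=> /Hws [].
    + by move=> w [<-|/Hws []].
  exists (a :: l) => b Pb; case: (classic (b = a)) => [->|Hba]; first by left.
  right; exact: Hl.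
Qed.

Lemma inf_distinct (Hinf : forall l : seq A, exists y, ~ List.In y l) (avoid : seq A) :
  forall k, exists ws, List.NoDup ws /\ size ws = k /\ forall w, List.In w ws -> ~ List.In w avoid.
Proof.
elim => [|k [ws [H1 [H2 H3]]]]; first by exists [::]; split => //; constructor.
have [y Hy] := Hinf (ws ++ avoid).
exists (y :: ws); split; last split.
- constructor => // Hw; apply: Hy; apply: List.in_or_app; by left.
- by rewrite /= H2.
- move=> w [<-|Hw]; last exact: H3.
  move=> Hw; apply: Hy; apply: List.in_or_app; by right.
Qed.

Definition envL (ys : seq nat) (ws : seq A) (e : nat -> A) : nat -> A :=
  fun u => if u \in ys then nth (e u) ws (index u ys) else e u.

Lemma envL_out ys ws e u : u \notin ys -> envL ys ws e u = e u.
Proof. by rewrite /envL => /negbTE ->. Qed.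

Lemma envL_map ys ws e : uniq ys -> size ws = size ys -> map (envL ys ws e) ys = ws.
Proof.
move=> Hu Hs; apply: (@eq_from_nth _ (e 0)); first by rewrite size_map.
move=> i; rewrite size_map => Hi.
rewrite (nth_map 0) // /envL mem_nth // index_uniq //.
by apply: set_nth_default; rewrite Hs.
Qed.

Lemma In_map_nat (f : nat -> A) (s : seq nat) a : List.In a (map f s) <-> exists2 x, x \in s & a = f x.
Proof.
elim: s => [|x s IH] /=; first by split => // -[].
split.
- case=> [<-|Ha]; first by exists x => //; rewrite inE eqxx.
  have [y Hy ->] := (proj1 IH) Ha; exists y => //; by rewrite inE Hy orbT.
- move=> [y]; rewrite inE => /orP [/eqP ->|Hy] Ea; first by left.
  right; apply IH; by exists y.
Qed.

Lemma NoDup_map_nat (g : nat -> A) (ys : seq nat) : uniq ys ->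
  (forall u v, u \in ys -> v \in ys -> u <> v -> g u <> g v) -> List.NoDup (map g ys).
Proof.
elim: ys => [|y ys IH] /=; first by constructor.
move=> /andP [Hy Hu] H; constructor.
- move=> /In_map_nat [x Hx E]; apply: (H x y) => //; first by rewrite inE Hx orbT.
  + by rewrite inE eqxx.
  + by move=> Exy; move: Hy; rewrite -Exy Hx.
- apply: IH => // u v Hu' Hv'; apply: H; by rewrite inE ?Hu' ?Hv' orbT.
Qed.
End Lists.

Lemma In_mem (T : eqType) (x : T) s : List.In x s <-> x \in s.
Proof.
elim: s => [|y s IH] //=; rewrite inE; split.
- by move=> [->|/IH ->]; rewrite ?eqxx ?orbT.
- by move=> /orP [/eqP ->|/IH]; [left|right].
Qed.

Lemma In_map_gen (A B : Type) (f : A -> B) (s : seq A) a : List.In a s -> List.In (f a) (map f s).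
Proof. elim: s => [|b s IH] //= [->|H]; [by left | right; exact: IH]. Qed.

Section Back.
Variable L : signature.

Definition Lx (M : structure L) : signature :=
  @Signature (funsym L + carrier M)
    (fun f => match f with inl f => fun_ar f | inr _ => 0 end) (relsym L) (@rel_ar L).

Definition Ex_emb (M : structure L) : sig_embedding L (Lx M).
Proof.
refine (@SigEmbedding L (Lx M) inl (fun f => erefl) _ id (fun r => erefl) _).
- by move=> a b [].
- by move=> a b.
Defined.

Definition Mx (M : structure L) : structure (Lx M) :=
  @Structure (Lx M) (carrier M) (witness M)
    (fun f => match f return ('I_(@fun_ar (Lx M) f) -> carrier M) -> carrier M with
              | inl f0 => @ifun L M f0 | inr a => fun _ => a end)
    (fun r => @irel L M r).

Lemma eval_Mx (M : structure L) (e : nat -> M) (t : term L) :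
  eval (M := Mx M) e (tr_term (Ex_emb M) t) = eval e t.
Proof.
elim: t => [n|f args IH] //=.
congr (ifun _); apply: functional_extensionality => i.
rewrite IH; congr (eval e (args _)); exact: val_inj.
Qed.

Lemma sat_Mx (M : structure L) p : forall (e : nat -> M),
  sat (M := Mx M) e (tr_form (Ex_emb M) p) <-> sat e p.
Proof.
elim: p => [||t u|r args|p IH|p IHp q IHq|p IHp q IHq|x p IH|x p IH] e /=.
- by [].
- by [].
- by rewrite !eval_Mx.
- have -> : (fun i => eval (M := Mx M) e (tr_term (Ex_emb M) (args (cast_ord (emb_r_ar (Ex_emb M) r) i)))) =
            (fun i => eval e (args i)) => //.
  apply: functional_extensionality => i; rewrite eval_Mx; congr (eval e (args _)); exact: val_inj.
- by rewrite IH.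
- by rewrite IHp IHq.
- by rewrite IHp IHq.
- by split=> -[a Ha]; exists a; apply/IH.
- by split=> Ha a; apply/IH.
Qed.

Variables (T : theory L) (xs : seq nat).
Variable M : structure L.
Hypothesis HM : is_model M T.

Definition cpred (chi : formula (Lx M)) := eq_atom xs chi \/ const_atom xs chi.

Lemma conj_lemma (chi : formula L) (g : nat -> M) (ys : seq nat) : {subset ys <= xs} ->
  exists C, boolcomb cpred C /\ vars_in xs C /\
    forall e : nat -> M, sat (M := Mx M) e C <-> forall x, x \in ys -> free x chi -> e x = g x.
Proof.
elim: ys => [|y ys IH] Hsub.
- exists FTrue; split; first exact: bc_true. by split.
- have [C [HC [HvC HsC]]] : exists C, boolcomb cpred C /\ vars_in xs C /\
    forall e : nat -> M, sat (M := Mx M) e C <-> forall x, x \in ys -> free x chi -> e x = g x.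
    apply: IH => x Hx; apply: Hsub; by rewrite inE Hx orbT.
  have Hy : y \in xs by apply: Hsub; rewrite inE eqxx.
  case: (classic (free y chi)) => Hf.
  + exists (And (Eq (Var y) (@App (Lx M) (inr (g y)) (fun _ => Var 0))) C); split.
      apply: bc_and => //; apply: bc_atom; right.
      by exists y, (inr (g y)), (fun _ => Var 0).
    split.
      move=> u /= [[->|[i _]]|/HvC //] //; by case: i.
    move=> e /=; rewrite HsC; split.
    * move=> [H1 H2] x; rewrite inE => /orP [/eqP ->|Hx] Hfx //; exact: H2.
    * move=> H; split; first by apply: H; rewrite ?inE ?eqxx.
      move=> x Hx; apply: H; by rewrite inE Hx orbT.
  + exists C; split => //; split => // e; rewrite HsC; split.
    * move=> H x; rewrite inE => /orP [/eqP ->|Hx] Hfx //; exact: H.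
    * move=> H x Hx; apply: H; by rewrite inE Hx orbT.
Qed.

Lemma disj_lemma (chi : formula L) (sols : seq (nat -> M)) :
  exists D, boolcomb cpred D /\ vars_in xs D /\
    forall e : nat -> M, sat (M := Mx M) e D <->
      exists g, List.In g sols /\ sat g chi /\ forall x, x \in xs -> free x chi -> e x = g x.
Proof.
elim: sols => [|g sols IH].
- exists FFalse; split; first exact: bc_false. split => // e; split => // -[g [[] _]].
- have [D [HD [HvD HsD]]] := IH.
  have [C [HC [HvC HsC]]] := conj_lemma chi g (ys := xs) (fun x Hx => Hx).
  case: (classic (sat g chi)) => Hg.
  + exists (Or C D); split; first exact: bc_or.
    split; first by move=> u /= [/HvC|/HvD].
    move=> e /=; rewrite HsC HsD; split.
    * move=> [H|[h [H1 H2]]]; [exists g; split; [left|] | exists h; split; [right|]] => //.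
    * move=> [h [[<-|Hh] [H1 H2]]]; [left => // | right; by exists h].
  + exists D; split => //; split => // e; rewrite HsD; split.
    * move=> [h [H1 H2]]; exists h; split => //; by right.
    * move=> [h [[<-|Hh] [H1 H2]]] //; by exists h.
Qed.

Lemma atoms_lemma (psi : formula L) :
  boolcomb (fun chi => eq_atom xs chi \/ (vars_in xs chi /\ finitely_many_solutions T chi)) psi ->
  exists psi', boolcomb cpred psi' /\ vars_in xs psi' /\
    forall e : nat -> M, sat e psi <-> sat (M := Mx M) e psi'.
Proof.
elim => {psi} [p [[x [y [Hx Hy ->]]]|[Hv Hfin]]||| p _ [q [Hq [Hvq Hsq]]] | p1 p2 _ [q1 [Hq1 [Hv1 Hs1]]] _ [q2 [Hq2 [Hv2 Hs2]]] | p1 p2 _ [q1 [Hq1 [Hv1 Hs1]]] _ [q2 [Hq2 [Hv2 Hs2]]]].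
- exists (Eq (Var x) (Var y)); split; first by apply: bc_atom; left; exists x, y.
  split; last by [].
  by move=> u /= [->|->].
- have [n [sol Hsol]] := Hfin M HM.
  have [D [HD [HvD HsD]]] := disj_lemma p [seq sol i | i <- enum 'I_n].
  exists D; split => //; split => // e; rewrite HsD; split.
  + move=> Hp; have [i Hi] := Hsol e Hp; exists (sol i); split.
      apply: In_map_gen; apply/In_mem; by rewrite mem_enum.
    split; first by apply: (proj1 (sat_agree (p:=p) (e:=e) (e':=sol i) _)) Hp => u Hu; rewrite Hi.
    by move=> x _ Hx; rewrite Hi.
  + move=> [g [_ [Hg Hag]]]; apply: (proj1 (sat_agree (p:=p) (e:=g) (e':=e) _)) Hg => u Hu.
    by rewrite Hag //; exact: Hv.
- exists FTrue; split; [exact: bc_true | by split].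
- exists FFalse; split; [exact: bc_false | by split].
- exists (Not q); split; first exact: bc_not. split => // e /=; by rewrite Hsq.
- exists (And q1 q2); split; first exact: bc_and. split; first by move=> u /= [/Hv1|/Hv2].
  move=> e /=; by rewrite Hs1 Hs2.
- exists (Or q1 q2); split; first exact: bc_or. split; first by move=> u /= [/Hv1|/Hv2].
  move=> e /=; by rewrite Hs1 Hs2.
Qed.
End Back.

Lemma backward (L : signature) (T : theory L) (xs : seq nat) (phi : formula L) :
  complete_theory T -> vars_in xs phi ->
  (exists psi, boolcomb (fun chi => eq_atom xs chi \/
                          (vars_in xs chi /\ finitely_many_solutions T chi)) psi
               /\ T_equiv T phi psi) -> constantizable T xs phi.
Proof.
move=> HT Hvphi [psi [Hbc Heq]].
have [HTs [M HM] Hc] := HT.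
pose T' := fun s : formula (Lx M) => sentence s /\ forall e : nat -> Mx M, sat e s.
have [psi' [Hb' [Hv' Hs']]] := atoms_lemma HM Hbc.
have HT' : complete_theory T'.
  split; first by move=> s [].
  - by exists (Mx M) => s [].
  - move=> s Hs; case: (classic (forall e : nat -> Mx M, sat e s)) => H.
    + left => M' HM' e; exact: HM'.
    + right => M' HM' e; apply: HM'; split => // e0 He0; apply: H => e1.
      by apply: (proj1 (sat_agree (p:=s) (e:=e0) (e':=e1) _)) He0 => u /Hs.
exists (Lx M), (Ex_emb M), T'; split => //.
- move=> s Hs; split.
  + move=> u /free_tr; exact: HTs.
  + move=> e; apply/sat_Mx; exact: HM.
- exists psi'; split => //.
  move=> M' HM' e.
  apply/sat_Iff; apply: (transfer (N := Mx M) (W := xs) HT') => //.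
  + by move=> s [].
  + move=> u /free_Iff [/free_tr /Hvphi|/Hv'] //.
  + move=> e0; apply/sat_Iff; rewrite sat_Mx -Hs'; exact: Heq.
Qed.

Definition pb (P : Prop) : bool := if excluded_middle_informative P then true else false.
Lemma pbP (P : Prop) : pb P <-> P.
Proof. rewrite /pb; case: excluded_middle_informative => //. Qed.

Lemma In_cat (A : Type) (a : A) s t : List.In a (s ++ t) <-> List.In a s \/ List.In a t.
Proof. elim: s => [|b s IH] /=; [tauto | rewrite IH; tauto]. Qed.

Lemma In_map_inv (A B : Type) (f : A -> B) s b : List.In b (map f s) -> exists a, List.In a s /\ b = f a.
Proof.
elim: s => [|a s IH] //= [<-|/IH [a' [H ->]]]; [by exists a; split; [left|] | by exists a'; split; [right|]].
Qed.

Lemma In_allpairs (A B C : Type) (f : A -> B -> C) s t c :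
  List.In c [seq f x y | x <- s, y <- t] <->
  exists x y, [/\ List.In x s, List.In y t & c = f x y].
Proof.
elim: s => [|x s IH] /=; first by split => // -[x [y []]].
rewrite In_cat IH; split.
- case=> [H|[x' [y [H1 H2 ->]]]].
  + have [y [Hy ->]] := In_map_inv H; by exists x, y; split => //; left.
  + by exists x', y; split => //; right.
- move=> [x' [y [[<-|H1] H2 ->]]].
  + left; exact: In_map_gen.
  + right; by exists x', y.
Qed.

Fixpoint subl (T : Type) (s : seq T) : seq (seq T) :=
  if s is x :: s' then map (cons x) (subl s') ++ subl s' else [:: [::]].

Lemma subl_filter (T : Type) (p : pred T) s : List.In (filter p s) (subl s).
Proof.
elim: s => [|x s IH] /=; first by left.
apply/In_cat; case: (p x); [left; exact: In_map_gen | by right].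
Qed.

Lemma subl_sub (T : eqType) (s S : seq T) : List.In S (subl s) -> {subset S <= s}.
Proof.
elim: s S => [|x s IH] S /=; first by move=> [<-|].
move=> /In_cat [H|HS] y.
- have [S' [HS' ->]] := In_map_inv H.
  rewrite !inE => /orP [->//|/(IH _ HS') Hy]; by rewrite Hy orbT.
- move=> /(IH _ HS) Hy; by rewrite inE Hy orbT.
Qed.

Lemma size_length (T : Type) (s : seq T) : size s = List.length s.
Proof. by elim: s => //= x s ->. Qed.

Section Util.
Variable L : signature.

Fixpoint Dist (ws : seq nat) : formula L :=
  if ws is u :: ws' then And (AndL [seq Not (Eq (Var u) (Var v)) | v <- ws']) (Dist ws')
  else FTrue.

Lemma sat_AndL_map (M : structure L) (e : nat -> M) (f : nat -> formula L) s :
  sat e (AndL (map f s)) <-> forall x, x \in s -> sat e (f x).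
Proof.
rewrite sat_AndL; split.
- move=> H x Hx; apply: H; apply/In_map_nat; by exists x.
- move=> H A /In_map_nat [x Hx ->]; exact: H.
Qed.

Lemma free_AndL_map (f : nat -> formula L) s u :
  free u (AndL (map f s)) -> exists2 x, x \in s & free u (f x).
Proof. move=> /free_AndL [A [/In_map_nat [x Hx ->] H]]; by exists x. Qed.

Lemma sat_Dist (M : structure L) (e : nat -> M) ws : sat e (Dist ws) <-> List.NoDup (map e ws).
Proof.
elim: ws => [|u ws IH] /=; first by split => // _; constructor.
rewrite IH sat_AndL_map; split.
- move=> [H1 H2]; constructor => // /In_map_nat [v Hv E]; exact: (H1 v Hv).
- move=> /List.NoDup_cons_iff [H1 H2]; split => // v Hv /= E; apply: H1.
  apply/In_map_nat; by exists v.
Qed.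

Lemma free_Dist ws u : free u (Dist ws) -> u \in ws.
Proof.
elim: ws => [|w ws IH] //= [/free_AndL_map [v Hv /= [->|->]]|/IH H].
- by rewrite inE eqxx.
- by rewrite inE Hv orbT.
- by rewrite inE H orbT.
Qed.

Definition envs (M : structure L) (S : seq nat) (l : seq M) : seq (nat -> M) :=
  foldr (fun x acc => [seq upd g x a | a <- l, g <- acc]) [:: fun _ => witness M] S.

Lemma envs_cover (M : structure L) S (l : seq M) (e : nat -> M) :
  (forall x, x \in S -> List.In (e x) l) ->
  exists g, List.In g (envs S l) /\ forall x, x \in S -> g x = e x.
Proof.
elim: S => [|x S IH] H /=; first by exists (fun _ => witness M); split => //; left.
have [g [Hg Hge]] : exists g, List.In g (envs S l) /\ forall x, x \in S -> g x = e x.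
  apply: IH => y Hy; apply: H; by rewrite inE Hy orbT.
exists (upd g x (e x)); split.
- apply/In_allpairs; exists (e x), g; split => //; apply: H; by rewrite inE eqxx.
- move=> y; rewrite inE /upd; case: eqP => [->//|Hyx] /= Hy; exact: Hge.
Qed.

Lemma fin_sol (M : structure L) (chi : formula L) (S : seq nat) (l : seq M) :
  (forall u, free u chi -> u \in S) ->
  (forall e : nat -> M, sat e chi -> forall x, x \in S -> List.In (e x) l) ->
  exists n (sol : 'I_n -> nat -> M), forall e : nat -> M, sat e chi ->
      exists i, forall x, free x chi -> sol i x = e x.
Proof.
move=> Hv Hl.
pose E := envs S l.
exists (List.length E), (fun i => List.nth (nat_of_ord i) E (fun _ => witness M)) => e He.
have [g [Hg Hge]] := envs_cover (Hl e He).
have [k [Hk Hkg]] := List.In_nth E g (fun _ => witness M) Hg.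
have Hk' : k < List.length E by apply/ltP.
exists (Ordinal Hk') => x Hx /=; rewrite Hkg; apply: Hge; exact: Hv.
Qed.
End Util.

Lemma sat_agree1 (L : signature) (M : structure L) (p : formula L) (e e' : nat -> M) :
  (forall u, free u p -> e u = e' u) -> sat e p -> sat e' p.
Proof. move=> H; exact: (proj1 (sat_agree H)). Qed.

Section Final.
Variables (L : signature) (T : theory L) (xs : seq nat) (phi : formula L).
Hypothesis HT : complete_theory T.
Hypothesis Hvphi : vars_in xs phi.
Variable N : structure L.
Hypothesis HN : is_model N T.
Variable z : nat.
Hypothesis Hz : z \notin xs.
Variable F0 : formula L.
Hypothesis HF0 : forall u, free u F0 -> u = z.

Definition Fs (M : structure L) (a : M) := sat (fun _ => a) F0.
Definition Fm (x : nat) : formula L := Ex z (And (Eq (Var z) (Var x)) F0).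

Lemma sat_Fm (M : structure L) (e : nat -> M) x : x != z -> sat e (Fm x) <-> Fs (e x).
Proof.
move=> Hxz /=; rewrite /upd eqxx (negbTE Hxz); split.
- move=> [a [<- H]]; move: H; apply/sat_agree1 => u /HF0 ->; by rewrite eqxx.
- move=> H; exists (e x); split => //; move: H; apply/sat_agree1 => u /HF0 ->; by rewrite eqxx.
Qed.

Lemma free_Fm x u : free u (Fm x) -> u = x.
Proof. by move=> /= [Huz [[Hu|->]|/HF0 Hu]]. Qed.

Lemma xs_neq_z x : x \in xs -> x != z.
Proof. by move=> Hx; apply/eqP => E; move: Hz; rewrite -E Hx. Qed.

Variable lF : seq N.
Hypothesis HlF : forall a : N, Fs a -> List.In a lF.

Definition RelF (e e' : nat -> N) :=
  [/\ forall x y, x \in xs -> y \in xs -> (e x = e y <-> e' x = e' y),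
      forall x, x \in xs -> (Fs (e x) <-> Fs (e' x))
    & forall x, x \in xs -> Fs (e x) -> e x = e' x].

Hypothesis Hinv : forall e e', RelF e e' -> sat e phi -> sat e' phi.

Definition wsF := iota z.+1 (size lF).+1.
Definition thF : formula L := Not (And (Dist L wsF) (AndL (map Fm wsF))).

Lemma wsF_neq w : w \in wsF -> w != z.
Proof. rewrite mem_iota => /andP [H _]; apply/eqP => E; by rewrite E ltnn in H. Qed.

Lemma Fs_cover (M : structure L) : is_model M T -> exists l : seq M, forall a, Fs a -> List.In a l.
Proof.
move=> HM.
have Hth : forall e : nat -> M, sat e thF.
  apply: (transfer (W := wsF) HT HN); last exact: HM.
  - move=> u Hu; have : free u (Dist L wsF) \/ free u (AndL (map Fm wsF)) := Hu.
    case=> H; first exact: (free_Dist H).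
    by have [w Hw /free_Fm ->] := free_AndL_map H.
  - move=> e He; have [H1 H2] : sat e (Dist L wsF) /\ sat e (AndL (map Fm wsF)) := He.
    move: H1 H2 => /sat_Dist Hnd /sat_AndL_map Hall.
    have Hincl : List.incl (map e wsF) lF.
      move=> a /In_map_nat [w Hw ->]; apply: HlF; apply/sat_Fm; [exact: wsF_neq | exact: Hall].
    have := List.NoDup_incl_length Hnd Hincl.
    rewrite -!size_length size_map size_iota => /leP; by rewrite ltnn.
apply: (cover_lemma (K := size lF)) => ws Hnd Hws Hs.
pose e := envL wsF ws (fun _ => witness M).
have Hmap : map e wsF = ws by apply: envL_map; [exact: iota_uniq | by rewrite size_iota].
apply: (Hth e); change (sat e (Dist L wsF) /\ sat e (AndL (map Fm wsF))); split.
- apply/sat_Dist; by rewrite Hmap.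
- apply/sat_AndL_map => w Hw; apply/sat_Fm; first exact: wsF_neq.
  apply: Hws; rewrite -Hmap; apply/In_map_nat; by exists w.
Qed.

Definition PAIRS := [seq (x, y) | x <- xs, y <- xs].
Definition Rl (S : seq nat) := [seq x <- xs | x \notin S].
Definition Pat (E : seq (nat * nat)) : formula L :=
  AndL [seq (if p \in E then Eq (Var p.1) (Var p.2) else Not (Eq (Var p.1) (Var p.2))) | p <- PAIRS].
Definition chi (S : seq nat) (E : seq (nat * nat)) : formula L :=
  And (AndL (map Fm S))
      (ExChain (Rl S) (And (Pat E) (And (AndL [seq Not (Fm x) | x <- Rl S]) phi))).

Lemma PAIRSP x y : (x, y) \in PAIRS = (x \in xs) && (y \in xs).
Proof.
apply/idP/idP.
- move=> /allpairsP [[a b] [/= Ha Hb [-> ->]]]; by rewrite Ha Hb.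
- move=> /andP [Hx Hy]; exact: (allpairs_f pair Hx Hy).
Qed.

Lemma sat_AndL_mapT (M : structure L) (U : eqType) (e : nat -> M) (f : U -> formula L) s :
  sat e (AndL (map f s)) <-> forall x, x \in s -> sat e (f x).
Proof.
rewrite sat_AndL; split.
- move=> H x Hx; apply: H; apply: In_map_gen; exact/In_mem.
- move=> H A HA; have [x [Hx ->]] := In_map_inv HA; apply: H; exact/In_mem.
Qed.

Lemma free_AndL_mapT (U : eqType) (f : U -> formula L) s u :
  free u (AndL (map f s)) -> exists2 x, x \in s & free u (f x).
Proof.
move=> /free_AndL [A [HA H]]; have [x [Hx E]] := In_map_inv HA; subst A.
exists x => //; exact/In_mem.
Qed.

Lemma sat_Pat (M : structure L) (e : nat -> M) E :
  sat e (Pat E) <-> forall x y, x \in xs -> y \in xs ->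
     if (x, y) \in E then e x = e y else e x <> e y.
Proof.
rewrite /Pat sat_AndL_mapT; split.
- move=> H x y Hx Hy; have := H (x, y); rewrite PAIRSP Hx Hy => /(_ isT) /=.
  by case: ((x, y) \in E).
- move=> H [x y]; rewrite PAIRSP => /andP [Hx Hy] /=; have := H x y Hx Hy.
  by case: ((x, y) \in E).
Qed.

Lemma free_Pat E u : free u (Pat E) -> u \in xs.
Proof.
move=> /free_AndL_mapT [[x y]]; rewrite PAIRSP => /andP [Hx Hy].
by case: ((x, y) \in E) => /= [[->|->]|[->|->]].
Qed.

Lemma sat_chi (M : structure L) (e : nat -> M) S E : {subset S <= xs} ->
  sat e (chi S E) <-> (forall x, x \in S -> Fs (e x)) /\
    exists g : nat -> M, [/\ forall u, u \notin Rl S -> g u = e u,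
      forall x y, x \in xs -> y \in xs -> (if (x, y) \in E then g x = g y else g x <> g y),
      forall x, x \in Rl S -> ~ Fs (g x) & sat g phi].
Proof.
move=> HS; rewrite /chi /=; rewrite sat_AndL_map sat_ExChain.
have HR : forall x, x \in Rl S -> x \in xs by move=> x; rewrite mem_filter => /andP [].
split.
- move=> [H1 [g [Hg [/sat_Pat Hp [/sat_AndL_map Hn Hphi]]]]]; split.
    move=> x Hx; apply/sat_Fm; [apply: xs_neq_z; exact: HS | exact: H1].
  exists g; split => // x Hx /= Hf; apply: (Hn x Hx); apply/sat_Fm => //.
  apply: xs_neq_z; exact: HR.
- move=> [H1 [g [Hg Hp Hn Hphi]]]; split.
    move=> x Hx; apply/sat_Fm; [apply: xs_neq_z; exact: HS | exact: H1].
  exists g; split => //; split; first exact/sat_Pat.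
  split => //; apply/sat_AndL_map => x Hx Hs; apply: (Hn x Hx).
  by apply/(sat_Fm g (xs_neq_z (HR x Hx))).
Qed.

Lemma free_chi S E u : {subset S <= xs} -> free u (chi S E) -> u \in S.
Proof.
move=> HS /= [/free_AndL_map [x Hx /free_Fm ->] //|/free_ExChain [HuR Hb]].
have Hu : u \in xs.
  move: Hb => /= [/free_Pat //|[/free_AndL_map [x Hx /= /free_Fm ->]|/Hvphi //]].
  by move: Hx; rewrite mem_filter => /andP [].
by move: HuR; rewrite mem_filter Hu andbT negbK.
Qed.

Definition As : seq (formula L) :=
  [seq Eq (Var p.1) (Var p.2) | p <- PAIRS] ++ [seq Fm x | x <- xs] ++
  [seq chi S0 E0 | S0 <- subl xs, E0 <- subl PAIRS].

Definition Pgood (c : formula L) := eq_atom xs c \/ (vars_in xs c /\ finitely_many_solutions T c).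

Lemma As_good A : List.In A As -> Pgood A /\ vars_in xs A.
Proof.
rewrite /As => /In_cat [HA|/In_cat [HA|/In_allpairs [S0 [E [HS HE ->]]]]].
- have [[x y] [Hp ->]] := In_map_inv HA.
  move: Hp => /In_mem; rewrite PAIRSP => /andP [Hx Hy].
  split; first by left; exists x, y.
  by move=> u /= [->|->].
- have [x [Hx ->]] := In_map_inv HA.
  move: Hx => /In_mem Hx.
  have Hv : vars_in xs (Fm x) by move=> u /free_Fm ->.
  split => //; right; split => // M HM.
  have [l Hl] := Fs_cover HM.
  apply: (fin_sol (S := [:: x]) (l := l)).
  + by move=> u /free_Fm ->; rewrite inE.
  + move=> e He y; rewrite inE => /eqP ->; apply: Hl; apply/sat_Fm => //; exact: xs_neq_z.
- have HSs := subl_sub HS.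
  have Hv : vars_in xs (chi S0 E) by move=> u Hu; exact: (HSs _ (free_chi HSs Hu)).
  split => //; right; split => // M HM.
  have [l Hl] := Fs_cover HM.
  apply: (fin_sol (S := S0) (l := l)); first by move=> u Hu; exact: (free_chi HSs Hu).
  move=> e He y Hy; have [H _] := (proj1 (sat_chi _ _ HSs)) He; apply: Hl; exact: H.
Qed.

Lemma As_det (e e' : nat -> N) : (forall A, List.In A As -> (sat e A <-> sat e' A)) ->
  sat e phi -> sat e' phi.
Proof.
move=> Hag Hphi.
pose S := [seq x <- xs | pb (Fs (e x))].
pose E := [seq p <- PAIRS | pb (e p.1 = e p.2)].
have HSs : {subset S <= xs} by move=> x; rewrite /S mem_filter => /andP [].
have HinS x : x \in S = (x \in xs) && pb (Fs (e x)) by rewrite /S mem_filter andbC.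
have HinE x y : x \in xs -> y \in xs -> ((x, y) \in E) = pb (e x = e y).
  by move=> Hx Hy; rewrite /E mem_filter PAIRSP Hx Hy !andbT.
have HinR x : x \in Rl S = (x \in xs) && ~~ pb (Fs (e x)).
  by rewrite /Rl mem_filter HinS andbC; case: (x \in xs).
have Heq x y : x \in xs -> y \in xs -> (e x = e y <-> e' x = e' y).
  move=> Hx Hy; apply: (Hag (Eq (Var x) (Var y))); apply/In_cat; left.
  apply: (@In_map_gen _ _ (fun p : nat * nat => Eq (Var p.1) (Var p.2)) _ (x, y)).
  apply/In_mem; by rewrite PAIRSP Hx Hy.
have HF x : x \in xs -> (Fs (e x) <-> Fs (e' x)).
  move=> Hx; rewrite -!sat_Fm ?xs_neq_z //; apply: Hag; apply/In_cat; right; apply/In_cat; left.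
  apply: In_map_gen; exact/In_mem.
have Hchi : sat e' (chi S E).
  apply/Hag.
    apply/In_cat; right; apply/In_cat; right; apply/In_allpairs; exists S, E; split => //;
    exact: subl_filter.
  apply/sat_chi => //; split.
    by move=> x; rewrite HinS => /andP [_ /pbP].
  exists e; split => //.
  - move=> x y Hx Hy; rewrite HinE // /pb; by case: excluded_middle_informative.
  - by move=> x; rewrite HinR => /andP [_ /negP Hn] H; apply: Hn; apply/pbP.
move: Hchi => /sat_chi [] // _ [g [Hg Hp Hn Hgphi]].
apply: (Hinv (e := g)) => //; split.
- move=> x y Hx Hy; have := Hp x y Hx Hy; rewrite HinE // -Heq // /pb.
  by case: excluded_middle_informative => [Hxy|Hxy] Hg'; split.
- move=> x Hx; case: (boolP (x \in S)) => HxS.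
  + by rewrite Hg // /Rl mem_filter HxS.
  + have HxR : x \in Rl S by rewrite /Rl mem_filter HxS Hx.
    have Hne : ~ Fs (e x) by move: HxS; rewrite HinS Hx /= => /negP Hn0 H; apply: Hn0; apply/pbP.
    split => H; [by case: (Hn x HxR H) | by exfalso; apply: Hne; apply/(HF x Hx)].
- move=> x Hx HFx; case: (boolP (x \in Rl S)) => HxR; first by have := Hn x HxR.
  by rewrite Hg.
Qed.
Lemma final_result : exists psi, boolcomb Pgood psi /\ T_equiv T phi psi.
Proof.
have [psi [Hb [Hv Hs]]] := @bc_gen L N Pgood xs As As_good (fun e => sat e phi)
  (fun e e' H => As_det H).
exists psi; split => // M HM e; apply/sat_Iff.
apply: (transfer (W := xs) HT HN); last exact: HM.
- move=> u /free_Iff [/Hvphi|/Hv] //.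
- move=> e0; apply/sat_Iff; exact: Hs.
Qed.
End Final.

Definition updI (A : Type) (g : nat -> A) (I : seq nat) (a : A) : nat -> A :=
  fun u => if u \in I then a else g u.

Lemma count_le (p q : pred nat) s : (forall x, x \in s -> q x -> p x) -> count q s <= count p s.
Proof.
elim: s => [|x s IH] //= H.
have H' : forall y, y \in s -> q y -> p y by move=> y Hy; apply: H; rewrite inE Hy orbT.
apply: leq_add; last exact: IH.
case Hq: (q x) => //; by rewrite (H x (mem_head _ _) Hq).
Qed.

Lemma count_lt (p q : pred nat) s x0 : (forall x, x \in s -> q x -> p x) ->
  x0 \in s -> p x0 -> ~~ q x0 -> count q s < count p s.
Proof.
elim: s => [|x s IH] // H.
have H' : forall y, y \in s -> q y -> p y by move=> y Hy; apply: H; rewrite inE Hy orbT.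
rewrite inE => /orP [/eqP <-|Hx0] Hp Hq /=.
- rewrite Hp (negbTE Hq) add0n add1n ltnS; exact: count_le.
- apply: leq_trans (_ : (q x : nat) + count p s <= _); first by rewrite ltn_add2l; exact: IH.
  rewrite leq_add2r; case Hqx: (q x) => //; by rewrite (H x (mem_head _ _) Hqx).
Qed.

Lemma maxn_fold (x : nat) xs : x \in xs -> x <= foldr maxn 0 xs.
Proof.
elim: xs => [|y xs IH] //=; rewrite inE => /orP [/eqP ->|/IH H]; first exact: leq_maxl.
exact: (leq_trans H (leq_maxr _ _)).
Qed.

Section Inf.
Variables (L : signature) (xs : seq nat) (phi : formula L).
Hypothesis Hvphi : vars_in xs phi.
Variable N : structure L.
Variable l : seq N.
Hypothesis Hpat : forall e e' : nat -> N,
  (forall x y, x \in xs -> y \in xs -> (e x = e y <-> e' x = e' y)) ->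
  (forall x, x \in xs -> forall c, List.In c l -> (e x = c <-> e' x = c)) ->
  (sat e phi <-> sat e' phi).

Definition zz := (foldr maxn 0 xs).+1.
Definition KK := size l + size xs.
Definition ys := iota zz.+1 KK.+1.

Lemma zz_notin : zz \notin xs.
Proof. apply/negP => /maxn_fold; by rewrite /zz ltnn. Qed.

Lemma ys_notin y : y \in ys -> y \notin xs.
Proof.
rewrite mem_iota => /andP [H _]; apply/negP => /maxn_fold H2.
have := leq_trans H H2; by rewrite /zz ltnNge leqW.
Qed.

Lemma ys_neq_zz y : y \in ys -> y != zz.
Proof. rewrite mem_iota => /andP [H _]; apply/eqP => E; by rewrite E ltnn in H. Qed.

Lemma uniq_ys : uniq ys. Proof. exact: iota_uniq. Qed.
Lemma size_ys : size ys = KK.+1. Proof. exact: size_iota. Qed.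

Definition PatI (J : seq nat) : formula L :=
  AndL [seq (if x \in J then Eq (Var x) (Var zz) else Not (Eq (Var x) (Var zz))) | x <- xs].
Definition Sub (J : seq nat) (y : nat) : formula L :=
  ExChain J (And (AndL [seq Eq (Var x) (Var y) | x <- J]) phi).
Definition Diff (J : seq nat) (y : nat) : formula L := Not (Iff (Sub J y) phi).
Definition Spec (J : seq nat) : formula L :=
  ExChain (xs ++ ys) (And (PatI J) (And (Dist L ys) (AndL [seq Diff J y | y <- ys]))).
Definition F0 : formula L := OrL [seq Spec J | J <- subl xs].

Lemma sat_Sub (e : nat -> N) J y : y \notin J -> sat e (Sub J y) <-> sat (updI e J (e y)) phi.
Proof.
move=> HyI; rewrite /Sub sat_ExChain; split.
- move=> [g [Hg [/sat_AndL_map Heq Hphi]]].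
  have -> : updI e J (e y) = g => //.
  apply: functional_extensionality => u; rewrite /updI; case: ifP => Hu.
  + rewrite -(Hg y HyI); exact: esym (Heq u Hu).
  + by rewrite Hg // Hu.
- move=> H; exists (updI e J (e y)); split.
  + by move=> u Hu; rewrite /updI (negbTE Hu).
  + split => //; apply/sat_AndL_map => x Hx /=; by rewrite /updI Hx (negbTE HyI).
Qed.

Lemma free_Sub J y u : free u (Sub J y) -> u = y \/ u \in xs.
Proof.
move=> /free_ExChain [HuI [/free_AndL_map [x Hx /= [Hux|Hux]]|/Hvphi]]; [|by left|by right].
by subst u; rewrite Hx in HuI.
Qed.

Definition SpecSem (J : seq nat) (a : N) :=
  exists g : nat -> N, [/\ forall x, x \in xs -> (if x \in J then g x = a else g x <> a),
    List.NoDup (map g ys)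
  & forall y, y \in ys -> ~ (sat (updI g J (g y)) phi <-> sat g phi)].

Lemma agree_xs (g h : nat -> N) : (forall x, x \in xs -> g x = h x) -> (sat g phi <-> sat h phi).
Proof. move=> H; apply: sat_agree => u /Hvphi; exact: H. Qed.

Lemma updI_agree (g h : nat -> N) J a : (forall x, x \in xs -> g x = h x) ->
  forall x, x \in xs -> updI g J a x = updI h J a x.
Proof. move=> H x Hx; rewrite /updI; case: ifP => // _; exact: H. Qed.

Lemma sat_Spec J a : List.In J (subl xs) -> sat (fun _ => a) (Spec J) <-> SpecSem J a.
Proof.
move=> HI; have HIs := subl_sub HI.
have HyI y : y \in ys -> y \notin J.
  move=> Hy; apply/negP => /HIs; by move: (ys_notin Hy) => /negP.
rewrite /Spec sat_ExChain; split.
- move=> [g [Hg Hb]].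
  have [Hp [Hd Hdiff]] : sat g (PatI J) /\ sat g (Dist L ys) /\ sat g (AndL [seq Diff J y | y <- ys]) := Hb.
  move/sat_AndL_map: Hp => Hp; move/sat_AndL_map: Hdiff => Hdiff.
  have {}Hd := (proj1 (sat_Dist g ys)) Hd.
  have Hgz : g zz = a.
    apply: Hg; rewrite mem_cat negb_or zz_notin /=; apply/negP => /ys_neq_zz; by rewrite eqxx.
  exists g; split => //.
  + move=> x Hx; have := Hp x Hx; by case: (x \in J) => /=; rewrite Hgz.
  + move=> y Hy; have := Hdiff y Hy => /= H1 H2; apply: H1; apply/sat_Iff.
    by rewrite sat_Sub ?HyI.
- move=> [g [Hp Hd Hdiff]].
  pose g' := fun u => if (u \in xs) || (u \in ys) then g u else a.
  have Hgx : forall x, x \in xs -> g' x = g x by move=> x Hx; rewrite /g' Hx.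
  have Hgy : forall y, y \in ys -> g' y = g y by move=> y Hy; rewrite /g' Hy orbT.
  have Hgz : g' zz = a.
    rewrite /g' (negbTE zz_notin) /=; case: ifP => // /ys_neq_zz; by rewrite eqxx.
  exists g'; split.
    by move=> u; rewrite mem_cat /g' => /negbTE ->.
  split.
    apply/sat_AndL_map => x Hx; have := Hp x Hx; by case: (x \in J) => /=; rewrite Hgz Hgx.
  split.
    apply: (proj2 (sat_Dist g' ys)); have -> : map g' ys = map g ys by apply/eq_in_map => y Hy; exact: Hgy.
    done.
  apply/sat_AndL_map => y Hy /= /sat_Iff; rewrite sat_Sub ?HyI // => H; apply: (Hdiff y Hy).
  rewrite -(agree_xs (g := g') (h := g) Hgx) -H; apply: agree_xs; rewrite Hgy //.
  apply: updI_agree => x Hx; by rewrite Hgx.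
Qed.

Lemma free_F0 u : free u F0 -> u = zz.
Proof.
move=> /free_OrL [A [HA HuA]]; have [J [HI EA]] := In_map_inv HA; subst A.
move: HuA => /free_ExChain [Hu Hb].
have Huxs : u \notin xs by move: Hu; rewrite mem_cat negb_or => /andP [].
have Huys : u \notin ys by move: Hu; rewrite mem_cat negb_or => /andP [].
have [Hf|[Hf|Hf]] : free u (PatI J) \/ free u (Dist L ys) \/ free u (AndL [seq Diff J y | y <- ys]) := Hb.
- move: Hf => /free_AndL_map [x Hx Hf].
  move: Hf; case: (x \in J) => /= [[Hux|->]|[Hux|->]] //; by subst u; rewrite Hx in Huxs.
- by rewrite (free_Dist Hf) in Huys.
- move: Hf => /free_AndL_map [y Hy Hf].
  move: Hf => /= /free_Iff [/free_Sub [Hf|Hf]|/Hvphi Hf].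
  + by subst u; rewrite Hy in Huys.
  + by rewrite Hf in Huxs.
  + by rewrite Hf in Huxs.
Qed.
Lemma Fs_sem a : Fs F0 a <-> exists J, List.In J (subl xs) /\ SpecSem J a.
Proof.
rewrite /Fs /F0 sat_OrL; split.
- move=> [A [HA HsA]]; have [J [HJ EA]] := In_map_inv HA; subst A.
  exists J; split => //; exact/sat_Spec.
- move=> [J [HJ HS]]; exists (Spec J); split; first exact: In_map_gen.
  exact/sat_Spec.
Qed.

Lemma K1 J a : List.In J (subl xs) -> SpecSem J a -> List.In a l.
Proof.
move=> HJ [g [Hp Hd Hdiff]]; apply: NNPP => Hna.
have Hincl : List.incl (map g ys) (l ++ map g xs).
  move=> w /In_map_nat [y Hy ->]; apply: NNPP => Hw; apply: (Hdiff y Hy).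
  have Hwl : ~ List.In (g y) l by move=> H; apply: Hw; apply/In_cat; left.
  have Hwx : forall u, u \in xs -> g y <> g u.
    move=> u Hu E; apply: Hw; apply/In_cat; right; apply/In_map_nat; by exists u.
  apply: Hpat.
  + move=> x u Hx Hu; have := Hp x Hx; have := Hp u Hu; rewrite /updI.
    case: (x \in J); case: (u \in J) => Hpu Hpx; split => // E.
    * by rewrite Hpx Hpu.
    * by exfalso; apply: (Hwx u Hu).
    * by exfalso; apply: Hpu; rewrite -E.
    * by exfalso; apply: (Hwx x Hx); rewrite E.
    * by exfalso; apply: Hpx; rewrite E.
  + move=> x Hx c Hc; have := Hp x Hx; rewrite /updI; case: (x \in J) => // Hpx.
    split => E; exfalso; [apply: Hwl; by rewrite E | apply: Hna; by rewrite -Hpx E].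
have := List.NoDup_incl_length Hd Hincl.
rewrite -!size_length size_cat !size_map size_ys => /leP.
by rewrite /KK ltnn.
Qed.

Lemma K2 (Hinf : forall l0 : seq N, exists y, ~ List.In y l0) (e : nat -> N) (a : N) (avoid : seq N) :
  let J := [seq x <- xs | pb (e x = a)] in
  ~ SpecSem J a -> exists y, ~ List.In y avoid /\ (sat (updI e J y) phi <-> sat e phi).
Proof.
move=> J HnS; apply: NNPP => Hn.
have Hch : forall y, ~ List.In y avoid -> ~ (sat (updI e J y) phi <-> sat e phi).
  move=> y Hy H; apply: Hn; by exists y.
have [ws [Hnd [Hsz Hav]]] := inf_distinct Hinf avoid KK.+1.
pose g := envL ys ws e.
have Hmap : map g ys = ws by apply: envL_map; [exact: uniq_ys | by rewrite Hsz size_ys].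
have Hgx : forall x, x \in xs -> g x = e x.
  move=> x Hx; apply: envL_out; apply/negP => Hy; by move: (ys_notin Hy); rewrite Hx.
apply: HnS; exists g; split.
- move=> x Hx; rewrite Hgx // /J mem_filter Hx andbT /pb.
  by case: excluded_middle_informative.
- by rewrite Hmap.
- move=> y Hy H; apply: (Hch (g y)).
    apply: Hav; rewrite -Hmap; apply/In_map_nat; by exists y.
  rewrite -(agree_xs (g := g) (h := e) Hgx) -H; apply: agree_xs; apply: updI_agree => x Hx.
  by rewrite Hgx.
Qed.
Definition bad (e : nat -> N) x := ~ Fs F0 (e x) /\ List.In (e x) l.
Definition generic (g : nat -> N) := forall x, x \in xs -> ~ Fs F0 (g x) -> ~ List.In (g x) l.

Lemma Rel_refl (e : nat -> N) : RelF xs F0 e e. Proof. by split. Qed.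

Lemma Rel_sym (e e' : nat -> N) : RelF xs F0 e e' -> RelF xs F0 e' e.
Proof.
move=> [H1 H2 H3]; split.
- move=> x y Hx Hy; by rewrite (H1 x y Hx Hy).
- move=> x Hx; by rewrite (H2 x Hx).
- move=> x Hx HF; apply: esym; apply: H3 => //; exact/(H2 x Hx).
Qed.

Lemma Rel_trans (e1 e2 e3 : nat -> N) : RelF xs F0 e1 e2 -> RelF xs F0 e2 e3 -> RelF xs F0 e1 e3.
Proof.
move=> [H1 H2 H3] [G1 G2 G3]; split.
- move=> x y Hx Hy; by rewrite (H1 x y Hx Hy) (G1 x y Hx Hy).
- move=> x Hx; by rewrite (H2 x Hx) (G2 x Hx).
- move=> x Hx HF; rewrite (H3 x Hx HF); apply: G3 => //; exact/(H2 x Hx).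
Qed.

Lemma Fs_in a : Fs F0 a -> List.In a l.
Proof. move=> /Fs_sem [J [HJ HS]]; exact: K1 HS. Qed.

Lemma lemB (Hinf : forall l0 : seq N, exists y, ~ List.In y l0) : forall n (e : nat -> N),
  count (fun x => pb (bad e x)) xs <= n ->
  exists g, [/\ RelF xs F0 e g, (sat e phi <-> sat g phi) & generic g].
Proof.
elim => [|n IH] e Hc; (case: (classic (exists x, x \in xs /\ bad e x)) => [[x0 [Hx0 Hb0]]|Hnb];
  [ | exists e; split; [exact: Rel_refl | by [] | by move=> x Hx HF Hl; apply: Hnb; exists x]]).
- have : 0 < count (fun x => pb (bad e x)) xs.
    have := count_lt (p := fun x => pb (bad e x)) (q := pred0) (s := xs) (x0 := x0).
    rewrite count_pred0; apply => //; exact/pbP.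
  by move=> Hpos; rewrite leqNgt Hpos in Hc.
- have [HnF0 Hl0] := Hb0.
  set a := e x0.
  set J := [seq x <- xs | pb (e x = a)].
  have HJ : forall x, x \in J = (x \in xs) && pb (e x = a) by move=> x; rewrite mem_filter andbC.
  have HnS : ~ SpecSem J a.
    move=> HS; apply: HnF0; apply/Fs_sem; exists J; split => //; exact: subl_filter.
  have [y [Hy Hphi]] := @K2 Hinf e a (l ++ map e xs) HnS.
  have Hyl : ~ List.In y l by move=> H; apply: Hy; apply/In_cat; left.
  have Hye : forall u, u \in xs -> y <> e u.
    move=> u Hu E; apply: Hy; apply/In_cat; right; apply/In_map_nat; by exists u.
  have HyF : ~ Fs F0 y by move=> /Fs_in.
  have HJe : forall x, x \in xs -> (x \in J <-> e x = a).
    move=> x Hx; rewrite HJ Hx /=; exact: pbP.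
  pose e1 := updI e J y.
  have Hrel : RelF xs F0 e e1.
    split.
    - move=> x u Hx Hu; rewrite /e1 /updI.
      case: (boolP (x \in J)) => hx; case: (boolP (u \in J)) => hu.
      + move: hx hu => /(HJe x Hx) -> /(HJe u Hu) ->; by split.
      + move: hx => /(HJe x Hx) ->; split => E.
        * by exfalso; move: hu => /negP; apply; apply/(HJe u Hu).
        * by exfalso; apply: (Hye u Hu).
      + move: hu => /(HJe u Hu) ->; split => E.
        * by exfalso; move: hx => /negP; apply; apply/(HJe x Hx).
        * by exfalso; apply: (Hye x Hx).
      + by [].
    - move=> x Hx; rewrite /e1 /updI; case: (boolP (x \in J)) => // hx.
      move: hx => /(HJe x Hx) ->; by split.
    - move=> x Hx HF; rewrite /e1 /updI; case: (boolP (x \in J)) => // hx.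
      by move: hx HF => /(HJe x Hx) ->.
  have Hlt : count (fun x => pb (bad e1 x)) xs < count (fun x => pb (bad e x)) xs.
    apply: (count_lt (x0 := x0)) => //.
    - move=> x Hx /pbP [HF Hl]; apply/pbP; move: HF Hl; rewrite /e1 /updI.
      by case: (x \in J).
    - exact/pbP.
    - apply/negP => /pbP [_]; rewrite /e1 /updI.
      have -> : x0 \in J by apply/(HJe x0 Hx0).
      done.
  have Hle : count (fun x => pb (bad e1 x)) xs <= n by rewrite -ltnS; exact: leq_trans Hlt Hc.
  have [g [Hrg Hpg Hgg]] := IH e1 Hle.
  exists g; split => //; first exact: Rel_trans Hrel Hrg.
  by rewrite -Hpg Hphi.
Qed.

Lemma lemA (g g' : nat -> N) : generic g -> generic g' -> RelF xs F0 g g' ->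
  sat g phi -> sat g' phi.
Proof.
move=> Hg Hg' [H1 H2 H3]; apply: (proj1 (Hpat H1 _)) => x Hx c Hc.
case: (classic (Fs F0 (g x))) => HF; first by rewrite (H3 x Hx HF).
have HF' : ~ Fs F0 (g' x) by move=> H; apply: HF; apply/(H2 x Hx).
split => E; exfalso; [apply: (Hg x Hx HF) | apply: (Hg' x Hx HF')]; by rewrite E.
Qed.

Lemma inv_inf (Hinf : forall l0 : seq N, exists y, ~ List.In y l0) (e e' : nat -> N) :
  RelF xs F0 e e' -> sat e phi -> sat e' phi.
Proof.
move=> Hr He.
have [g [Hrg Hpg Hgg]] := lemB Hinf (leqnn _) (e := e).
have [g' [Hrg' Hpg' Hgg']] := lemB Hinf (leqnn _) (e := e').
apply/Hpg'; apply: (lemA Hgg Hgg'); last exact/Hpg.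
exact: Rel_trans (Rel_sym Hrg) (Rel_trans Hr Hrg').
Qed.
End Inf.

Lemma pattern_lemma (L' : signature) (xs : seq nat) (N' : structure L') (psi : formula L') :
  boolcomb (fun chi => eq_atom xs chi \/ const_atom xs chi) psi ->
  exists l : seq N', forall e e' : nat -> N',
  (forall x y, x \in xs -> y \in xs -> (e x = e y <-> e' x = e' y)) ->
  (forall x, x \in xs -> forall c, List.In c l -> (e x = c <-> e' x = c)) ->
  (sat e psi <-> sat e' psi).
Proof.
elim => {psi} [p [[x [y [Hx Hy ->]]]|[x [c [args [Hx Hc ->]]]]]||| p _ [l Hl] | p1 p2 _ [l1 H1] _ [l2 H2] | p1 p2 _ [l1 H1] _ [l2 H2]].
- exists [::] => e e' Heq _ /=; exact: Heq.
- have Hconst : forall e : nat -> N', eval e (App args) = eval (fun _ => witness N') (App args).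
    move=> e; apply: eval_agree => u /= [i _]; move: (ltn_ord i); by rewrite {2}Hc.
  exists [:: eval (fun _ => witness N') (App args)] => e e' _ Hc'.
  change (e x = eval e (App args) <-> e' x = eval e' (App args)).
  rewrite !Hconst; apply: Hc' => //; by left.
- by exists [::].
- by exists [::].
- exists l => e e' H H' /=; by rewrite (Hl e e' H H').
- exists (l1 ++ l2) => e e' H H' /=.
  rewrite (H1 e e' H) ?(H2 e e' H) // => x Hx c Hc; apply: H' => //; apply/In_cat; by [right|left].
- exists (l1 ++ l2) => e e' H H' /=.
  rewrite (H1 e e' H) ?(H2 e e' H) // => x Hx c Hc; apply: H' => //; apply/In_cat; by [right|left].
Qed.

Lemma forward (L : signature) (T : theory L) (xs : seq nat) (phi : formula L) :
  complete_theory T -> vars_in xs phi -> constantizable T xs phi ->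
  exists psi, boolcomb (fun chi => eq_atom xs chi \/
                          (vars_in xs chi /\ finitely_many_solutions T chi)) psi
               /\ T_equiv T phi psi.
Proof.
move=> HT Hvphi [L' [E [T' [HT' HTT' [psi' [Hb' Heq']]]]]].
have [_ [N' HN'] _] := HT'.
pose N := reduct E N'.
have HN : is_model N T.
  move=> s Hs e; apply: (proj1 (sat_tr E s e)); exact: HN' _ (HTT' s Hs) e.
have Hphi : forall e : nat -> N, sat e phi <-> sat (M := N') e psi'.
  move=> e; rewrite -(sat_tr E phi e); exact: Heq' N' HN' e.
have [l0' Hl] := pattern_lemma N' Hb'.
pose l : seq N := l0'.
have Hpat : forall e e' : nat -> N,
  (forall x y, x \in xs -> y \in xs -> (e x = e y <-> e' x = e' y)) ->
  (forall x, x \in xs -> forall c, List.In c l -> (e x = c <-> e' x = c)) ->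
  (sat e phi <-> sat e' phi).
  move=> e e' H1 H2; rewrite !Hphi; exact: Hl.
clearbody l.
case: (classic (forall l0 : seq N, exists y, ~ List.In y l0)) => Hinf.
- have H1 := @free_F0 L xs phi Hvphi N l.
  have H2 := @Fs_in L xs phi Hvphi N l Hpat.
  have H3 := @inv_inf L xs phi Hvphi N l Hpat Hinf.
  have := @final_result L T xs phi HT Hvphi N HN (zz xs) (zz_notin xs) (@F0 L xs phi N l) H1 l H2 H3.
  done.
- have [l0 Hl0] : exists l0 : seq N, forall y, List.In y l0.
    apply: NNPP => H; apply: Hinf => l0; apply: NNPP => H'; apply: H; exists l0 => y.
    apply: NNPP => Hy; apply: H'; by exists y.
  have H1 : forall u, free u (@FTrue L) -> u = zz xs by [].
  have H2 : forall a : N, Fs FTrue a -> List.In a l0 by move=> a _; exact: Hl0.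
  have H3 : forall e e' : nat -> N, RelF xs FTrue e e' -> sat e phi -> sat e' phi.
    move=> e e' [_ _ H3]; apply: sat_agree1 => u /Hvphi Hu; exact: H3.
  exact: (@final_result L T xs phi HT Hvphi N HN (zz xs) (zz_notin xs) FTrue H1 l0 H2 H3).
Qed.

Theorem proposition3p6 (L : signature) (T : theory L) (xs : seq nat) (phi : formula L) :
  complete_theory T -> vars_in xs phi ->
  (constantizable T xs phi <->
   exists psi, boolcomb (fun chi => eq_atom xs chi \/
                          (vars_in xs chi /\ finitely_many_solutions T chi)) psi
               /\ T_equiv T phi psi).
Proof.
move=> HT Hv; split; [exact: forward | exact: backward].
Qed.
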